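(* Let $V\subset\mathbb{R}^d$ be a finite antichain, $p\in S_V$, and let $F$ be an $i$-flat of $S_V$. Then $p\in F$ if and only if there exist $v\in V_F$ and $q\in S_V$ such that $q\rhd_i v$ and $v\le p\le q$.
   Context: For $x,y\in\mathbb{R}^d$, $x\le y$ (dominance order) means $x_i\le y_i$ for all $i$; $y\rhd x$ means $y_i>x_i$ for all $i$; $y\rhd_i x$ means $y_i=x_i$ and $y_j>x_j$ for all $j\neq i$. $V\subset\mathbb{R}^d$ is a finite antichain in the dominance order (elements are called minima). The orthogonal surface $S_V$ is the topological boundary of $\langle V\rangle=\{x: x\ge v\text{ for some }v\in V\}$; equivalently $p\in S_V$ iff there is $v\in V$ with $v\le p$ and no $w\in V$ with $p\rhd w$. Flats: $U_i(v)=\{p\in S_V: p\rhd_i v\}$; for $v,w\in V$ put $v\sim_i w$ iff $U_i(v)\cap U_i(w)\neq\emptyset$, and let $\sim_i^c$ be the reflexive–transitive closure; the $i$-flat of $v$ is $F_i(v)=\overline{\bigcup_{w\sim_i^c v}U_i(w)}$ (topological closure), and an $i$-flat is any set of this form. For an $i$-flat $F$ let $V_F=F\cap V$ (the $\sim_i^c$-class of minima defining $F$). *)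

(* Defs.v *)
From HB Require Import structures.
From mathcomp Require Import all_boot all_order all_algebra.
From mathcomp Require Import all_classical all_reals all_analysis.
From Stdlib Require Import Relation_Operators.
Set Implicit Arguments. Unset Strict Implicit. Unset Printing Implicit Defensive.
Import Order.TTheory GRing.Theory Num.Theory.
Import numFieldNormedType.Exports.
Local Open Scope classical_set_scope.
Local Open Scope ring_scope.

Section OrthSurf.
Context {R : realType} {d : nat}.
Notation pt := 'rV[R]_d.

Definition dle (x y : pt) : Prop := forall j : 'I_d, x ord0 j <= y ord0 j.
Definition dgt (y x : pt) : Prop := forall j : 'I_d, x ord0 j < y ord0 j.
Definition dgt_i (i : 'I_d) (y x : pt) : Prop :=
  y ord0 i = x ord0 i /\ forall j : 'I_d, j != i -> x ord0 j < y ord0 j.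

Definition finite_antichain (V : set pt) : Prop :=
  finite_set V /\ forall v w, V v -> V w -> dle v w -> v = w.

Definition surface (V : set pt) : set pt :=
  [set p | (exists2 v, V v & dle v p) /\ ~ (exists2 w, V w & dgt p w)].

Definition Uflat (V : set pt) (i : 'I_d) (v : pt) : set pt :=
  [set p | surface V p /\ dgt_i i p v].

Definition sim_i (V : set pt) (i : 'I_d) (v w : pt) : Prop :=
  V v /\ V w /\ Uflat V i v `&` Uflat V i w !=set0.

Definition simc_i (V : set pt) (i : 'I_d) : pt -> pt -> Prop :=
  clos_refl_trans pt (sim_i V i).

Definition iflat_of (V : set pt) (i : 'I_d) (v : pt) : set pt :=
  @closure pt (\bigcup_(w in [set w | V w /\ simc_i V i v w]) Uflat V i w).

Definition is_iflat (V : set pt) (i : 'I_d) (F : set pt) : Prop :=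
  exists2 v, V v & F = iflat_of V i v.

Definition minima_of (V F : set pt) : set pt := F `&` V.

End OrthSurf.

(* Main.v *)
Require Import Defs.
From HB Require Import structures.
From mathcomp Require Import all_boot all_order all_algebra.
From mathcomp Require Import all_classical all_reals all_analysis.
From mathcomp Require Import lra.
Import Order.TTheory GRing.Theory Num.Theory.
Import numFieldNormedType.Exports.
Local Open Scope classical_set_scope.
Local Open Scope ring_scope.

Section Aux.
Variables (R : realType) (d : nat).
Notation pt := 'rV[R]_d.

Lemma lb_seq (T : eqType) (s : seq T) (f : T -> R) :
  exists2 e : R, 0 < e & forall t, t \in s -> f t = 0 \/ e <= `|f t|.
Proof.
elim: s => [|t s [e e0 He]]; first by exists 1 => //.
have [ft0|ftn0] := eqVneq (f t) 0.
  exists e => // u; rewrite inE => /orP[/eqP ->|/He //]; by left.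
exists (Num.min e `|f t|).
  by rewrite lt_min e0 normr_gt0.
move=> u; rewrite inE => /orP[/eqP ->|/He [->|h]]; first by right; rewrite ge_min lexx orbT.
  by left.
by right; rewrite ge_min h.
Qed.

Lemma delta_ex (V : set pt) (z : pt) : finite_set V ->
  exists2 e : R, 0 < e & forall u, V u -> forall k : 'I_d,
    u ord0 k = z ord0 k \/ e <= `|u ord0 k - z ord0 k|.
Proof.
move=> /finite_seqP [s ->].
have [e e0 He] := @lb_seq _ [seq (u, k) | u <- s, k <- enum 'I_d]
   (fun t => t.1 ord0 t.2 - z ord0 t.2).
exists e => // u us k.
have := He (u, k) (allpairs_f pair us (mem_enum _ k)).
move=> [h|h]; [left|by right].
by apply/eqP; rewrite -subr_eq0; apply/eqP.
Qed.

Lemma seg (V : set pt) (i : 'I_d) v p q : V v -> surface V q -> dgt_i i q v ->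
  dle v p -> dle p q -> closure (Uflat V i v) p.
Proof.
move=> Vv [_ sq] [qi qj] dvp dpq B /nbhs_ballP [e e0 He].
set N := `|q - p|.
have N0 : 0 <= N by rewrite /N normr_ge0.
set eps := Num.min 1 (e / (N + 1)).
have eps0 : 0 < eps by rewrite lt_min ltr01 divr_gt0 // ltr_wpDl.
have eps1 : eps <= 1 by rewrite ge_min lexx.
have epse : eps <= e / (N + 1) by rewrite ge_min lexx orbT.
set r := p + eps *: (q - p).
have rE : forall j, r ord0 j = p ord0 j + eps * (q ord0 j - p ord0 j).
  by move=> j; rewrite !mxE.
exists r; split; last first.
  apply: He; rewrite -ball_normE /ball_ /=.
  rewrite /r opprD addrA subrr add0r normrN normrZ ger0_norm; last exact: ltW.
  have N1 : 0 < N + 1 by rewrite ltr_wpDl.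
  apply: (@lt_le_trans _ _ (eps * (N + 1))).
    by rewrite ltr_pM2l // ltrDl.
  apply: (@le_trans _ _ (e / (N + 1) * (N + 1))).
    by rewrite ler_pM2r.
  by rewrite divfK // gt_eqF.
have pi : p ord0 i = v ord0 i.
  by apply/eqP; rewrite eq_le dvp -qi dpq.
split; last first.
  split; first by rewrite rE pi qi subrr mulr0 addr0.
  move=> j ji; rewrite rE; have := qj j ji; have := dvp j; have := dpq j; nra.
split; first by exists v => // j; rewrite rE; have := dvp j; have := dpq j; nra.
move=> [w Vw hw]; apply: sq; exists w => // j.
have := hw j; rewrite rE; have := dpq j; nra.
Qed.

Lemma derive (V : set pt) (i : 'I_d) (e : R) (z w x : pt) :
  (forall u, V u -> forall k : 'I_d,
    u ord0 k = z ord0 k \/ e <= `|u ord0 k - z ord0 k|) ->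
  V w -> dgt_i i x w -> (forall k, `|z ord0 k - x ord0 k| < e) ->
  w ord0 i = z ord0 i /\ dle w z.
Proof.
move=> He Vw [xi xj] cl.
have wi : w ord0 i = z ord0 i.
  case: (He w Vw i) => // h; exfalso.
  by move: h (cl i); rewrite -xi distrC; case: leP.
split => // k.
have [->|ki] := eqVneq k i; first by rewrite wi.
case: leP => // h; exfalso.
have xk := xj k ki.
case: (He w Vw k) => [hh|]; first by move: h; rewrite hh ltxx.
rewrite gtr0_norm ?subr_gt0 //.
have := cl k; rewrite ltr_norml => /andP [h1 h2].
lra.
Qed.

End Aux.
Arguments delta_ex {R d V}.
Arguments seg {R d V i v p q}.
Arguments derive {R d V i e z w x}.

Theorem lemma4p3 (R : realType) (d : nat) (V : set 'rV[R]_d)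
    (hV : finite_antichain V) (p : 'rV[R]_d) (hp : surface V p)
    (i : 'I_d) (F : set 'rV[R]_d) (hF : is_iflat V i F) :
  F p <-> exists v q, minima_of V F v /\ surface V q /\ dgt_i i q v /\
                      dle v p /\ dle p q.
Proof.
case: hV => fin anti.
case: hF => v0 V0 ->.
have near : forall z, iflat_of V i v0 z ->
  exists2 e : R, 0 < e & (forall u, V u -> forall k : 'I_d,
    u ord0 k = z ord0 k \/ e <= `|u ord0 k - z ord0 k|) /\
  exists w x, [/\ V w, simc_i V i v0 w, Uflat V i w x &
     forall k, `|z ord0 k - x ord0 k| < e].
  move=> z hz.
  have [e e0 He] := delta_ex z fin.
  exists e => //; split => //.
  have [x [[w [Vw sw] Ux] bx]] := hz _ (nbhsx_ballx z e e0).
  exists w, x; split => //.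
  by move: bx => [_ H] k; apply: H.
split.
- move=> hpF.
  have [e e0 [He [w [x [Vw sw Ux cl]]]]] := near p hpF.
  have Ux' := Ux.
  case: Ux' => [xs [xi xj]].
  have [wi dwp] := derive He Vw (conj xi xj) cl.
  set q : 'rV[R]_d := \row_j Num.max (p ord0 j) (x ord0 j).
  have qE : forall j, q ord0 j = Num.max (p ord0 j) (x ord0 j) by move=> j; rewrite mxE.
  exists w, q; split; [split=> //|split; [|split; [|split=> //]]].
  + apply: (closureS (A := Uflat V i w)).
      by move=> y Hy; exists w.
    apply: (seg Vw xs (conj xi xj)) => // j; last by case: (eqVneq j i) => [->|/xj/ltW]; [rewrite xi|].
  + split; first by exists w => // j; rewrite qE le_max; apply/orP; right;
      case: (eqVneq j i) => [->|/xj/ltW //]; rewrite xi.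
    move=> [u Vu hu].
    case: xs => _; apply; exists u => // k.
    case: ltP => // h; exfalso.
    have := hu k; rewrite qE lt_max => /orP[h2|]; last by rewrite ltNge h.
    case: (He u Vu k) => [hh|]; first by move: h2; rewrite hh ltxx.
    rewrite ltr0_norm ?subr_lt0 //.
    have := cl k; rewrite ltr_norml => /andP [h1 h3].
    lra.
  + split; first by rewrite qE -wi xi maxxx.
    move=> j ji; rewrite qE lt_max; apply/orP; right; exact: xj.
  + by move=> j; rewrite qE le_max lexx.
- move=> [v [q [[Fv Vv] [sq [dq [dvp dpq]]]]]].
  have [e e0 [He [w [x [Vw sw [_ Ux] cl]]]]] := near v Fv.
  have [_ dwv] := derive He Vw Ux cl.
  have wv := anti w v Vw Vv dwv; subst w.
  apply: (closureS (A := Uflat V i v)).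
    by move=> y Hy; exists v.
  exact: (seg Vv sq dq dvp dpq).
Qed.
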